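(* Let $\mathbf d=(d_1,\ldots,d_n)$ be a degree sequence, $w\in[n]$, and let $V_w\subseteq[n]$ and $\mathbf d_{n,w}=(d_v)_{v\in V_w}$ be as described in the context. Let $\mathcal G_w$ be a random functional graph on vertex set $V_w$ with degree sequence $\mathbf d_{n,w}$, i.e. the graph of a uniformly random $f:V_w\to V_w$ with $|f^{-1}(\{v\})|=d_v$ for all $v\in V_w$. Then an $n$-extension of $\mathcal G_w$ is a random functional graph with degree sequence $\mathbf d$, i.e. it is distributed as the graph of a uniformly random element of $\mathfrak F(\mathbf d)$.
   Context: A degree sequence is $\mathbf d=(d_1,\ldots,d_n)\in\mathbb N_0^n$ with $\sum_j d_j=n$; $\mathfrak F(\mathbf d)=\{f:[n]\to[n]: |f^{-1}(\{i\})|=d_i\ \forall i\}$; the functional graph of $f:V\to V$ has vertex set $V$ and edges $(v,f(v))$. Let $\sigma^2=\frac1n\sum_j d_j^2-1$ and $\hat n=\lfloor (n\sigma^2)^{4/3}\rfloor$. If $\hat n\ge n$, $V_w=[n]$. Otherwise let $v_1,\ldots,v_{n-\hat n}$ be $n-\hat n$ distinct vertices in $[n]\setminus\{w\}$ with $d_{v_i}=1$, chosen by a fixed deterministic rule (such vertices exist), and $V_w=[n]\setminus\{v_1,\ldots,v_{n-\hat n}\}$. ($\sum_{v\in V_w}d_v=|V_w|$.) Given $V'\subseteq[n]$ and a functional graph $G=(V',E')$ on $V'$, an $n$-extension of $G$ is the random graph on $[n]$ produced as follows: start with $V_0=V'$, $E_0=E'$; while $V_i\ne[n]$, let $u$ be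 the smallest element of $[n]\setminus V_i$; with probability $1/(|E_i|+1)$ set $V_{i+1}=V_i\cup\{u\}$, $E_{i+1}=E_i\cup\{(u,u)\}$ (a loop); otherwise choose an edge $(x,y)\in E_i$ uniformly at random and set $V_{i+1}=V_i\cup\{u\}$, $E_{i+1}=(E_i\setminus\{(x,y)\})\cup\{(x,u),(u,y)\}$; all random choices independent. The output is $(V_i,E_i)$ once $V_i=[n]$. *)

(* Defs.v *)
From HB Require Import structures.
From mathcomp Require Import all_boot all_order all_algebra.
Set Implicit Arguments. Unset Strict Implicit. Unset Printing Implicit Defensive.
Import Order.TTheory GRing.Theory Num.Theory.

Definition graph (n : nat) := {set ('I_n * 'I_n)}.

Definition graph_on n (V : {set 'I_n}) (f : {ffun 'I_n -> 'I_n}) : graph n :=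
  [set (v, f v) | v in V].

(* f encodes a map V -> V with |f^{-1}(v)| = d v for all v in V;
   outside V, f is normalised to the identity (so encodings are unique). *)
Definition in_F n (V : {set 'I_n}) (d : 'I_n -> nat) (f : {ffun 'I_n -> 'I_n}) : bool :=
  [forall v, if v \in V then (f v \in V) && (#|[set x in V | f x == v]| == d v)
             else f v == v].

Definition fungraph_law n (V : {set 'I_n}) (d : 'I_n -> nat) (E : graph n) : rat :=
  (#|[set f : {ffun 'I_n -> 'I_n} | in_F V d f && (graph_on V f == E)]|%:R
   / #|[set f : {ffun 'I_n -> 'I_n} | in_F V d f]|%:R)%R.

Definition next_vertex n (V : {set 'I_n}) : option 'I_n :=
  [pick i in ~: V | [forall j in ~: V, (i <= j)%N]].

Definition trans n (u : 'I_n) (E E' : graph n) : rat :=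
  ((#|E|.+1)%:R^-1 *
   ((E' == E :|: [set (u, u)])%:R
    + \sum_(e in E) (E' == (E :\ e) :|: [set (e.1, u); (u, e.2)])%:R))%R.

Definition step n (u : 'I_n) (mu : graph n -> rat) : graph n -> rat :=
  fun E' => (\sum_(E : graph n) mu E * trans u E E')%R.

Fixpoint extend_iter n (k : nat) (V : {set 'I_n}) (mu : graph n -> rat) : graph n -> rat :=
  match k with
  | 0 => mu
  | k'.+1 => match next_vertex V with
             | None => mu
             | Some u => extend_iter k' (u |: V) (step u mu)
             end
  end.

(* law of the n-extension of a random graph on V with law mu (n steps suffice) *)
Definition n_extension n (V : {set 'I_n}) (mu : graph n -> rat) : graph n -> rat :=
  extend_iter n V mu.

(* n * sigma^2 = sum_j d_j^2 - n  (a nonnegative integer) *)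
Definition nsigma2 n (d : 'I_n -> nat) : nat := ((\sum_j d j ^ 2) - n)%N.

(* hat n = floor((n sigma^2)^{4/3}) = largest m with m^3 <= (n sigma^2)^4 *)
Definition hatn n (d : 'I_n -> nat) : nat :=
  let x := nsigma2 d in \max_(m < (x ^ 4).+1 | (m ^ 3 <= x ^ 4)%N) (m : nat).

(* V is a valid choice of V_w (for an arbitrary deterministic rule) *)
Definition is_Vw n (d : 'I_n -> nat) (w : 'I_n) (V : {set 'I_n}) : Prop :=
  if (n <= hatn d)%N then V = setT
  else exists S : {set 'I_n},
      [/\ #|S| = (n - hatn d)%N, w \notin S, (forall v, v \in S -> d v = 1%N)
        & V = ~: S].

(* Main.v *)
Require Import Defs.
From HB Require Import structures.
From mathcomp Require Import all_boot all_order all_algebra.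
From mathcomp Require Import zify.
From Stdlib Require Import FunctionalExtensionality.
Set Implicit Arguments. Unset Strict Implicit. Unset Printing Implicit Defensive.
Import Order.TTheory GRing.Theory Num.Theory.

Section Ins.
Variable n : nat.
Implicit Types (u c x v : 'I_n) (V : {set 'I_n}) (f : {ffun 'I_n -> 'I_n}).

Definition ins u c f : {ffun 'I_n -> 'I_n} :=
  [ffun x => if x == c then u else if x == u then f c else f x].
Definition recov u c f : {ffun 'I_n -> 'I_n} :=
  [ffun x => if x == u then u else if x == c then f u else f x].
Definition swp u c x := if x == c then u else if x == u then c else x.

Lemma swpK u c : involutive (swp u c).
Proof.
move=> x; rewrite /swp.
case: (eqVneq x c) => [->|xc]; first by rewrite eqxx; case: eqVneq.
case: (eqVneq x u) => [->|xu]; first by rewrite eqxx.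
by rewrite (negbTE xc) (negbTE xu).
Qed.

Lemma mem_graph_on V f a b :
  ((a, b) \in graph_on V f) = (a \in V) && (b == f a).
Proof.
apply/imsetP/andP => [[x xV [-> ->]] | [aV /eqP ->]]; first by split.
by exists a.
Qed.

Lemma neq_uV u V y : u \notin V -> y \in V -> (y == u) = false.
Proof. by move=> uV yV; apply/eqP => yu; rewrite -yu yV in uV. Qed.

Lemma graph_ins_u u V f : u \notin V -> f u = u ->
  graph_on (u |: V) (ins u u f) = graph_on V f :|: [set (u, u)].
Proof.
move=> uV fu; apply/setP => -[a b].
rewrite in_setU in_set1 !mem_graph_on in_setU1 ffunE /= xpair_eqE.
case: (eqVneq a u) => [->|au] /=; first by rewrite (negbTE uV).
by rewrite orbF.
Qed.

Lemma graph_ins_c u c V f : u \notin V -> c \in V ->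
  graph_on (u |: V) (ins u c f) =
  (graph_on V f :\ (c, f c)) :|: [set (c, u); (u, f c)].
Proof.
move=> uV cV; apply/setP => -[a b].
rewrite in_setU in_setD1 in_set2 !mem_graph_on in_setU1 ffunE /= !xpair_eqE.
have cu := neq_uV uV cV.
case: (eqVneq a c) => [->|ac] /=.
  by rewrite cV cu /=; case: (b == f c); rewrite /= ?orbF ?orbT ?andbF.
case: (eqVneq a u) => [->|au] /=; first by rewrite (negbTE uV).
by rewrite orbF.
Qed.

Lemma pre_ins u c V f v : u \notin V -> c \in u |: V -> v \in V ->
  [set x in u |: V | ins u c f x == v] = swp u c @^-1: [set x in V | f x == v].
Proof.
move=> uV cV vV; apply/setP => x; rewrite !inE ffunE /swp.
case: (eqVneq x c) => [->|xc].
  by rewrite (negbTE uV) [u == v]eq_sym (neq_uV uV vV) andbF.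
case: (eqVneq x u) => [xu|xu] /=.
  by move: cV; rewrite in_setU1 -xu eq_sym (negbTE xc) /= => ->.
by [].
Qed.

Lemma card_pre_ins u c V f v : u \notin V -> c \in u |: V -> v \in V ->
  #|[set x in u |: V | ins u c f x == v]| = #|[set x in V | f x == v]|.
Proof.
move=> uV cV vV; rewrite pre_ins // card_preimset //.
exact: (can_inj (swpK u c)).
Qed.

Lemma preu u c V f : u \notin V -> (forall x, x \in V -> f x \in V) -> c \in u |: V ->
  [set x in u |: V | ins u c f x == u] = [set c].
Proof.
move=> uV fV cV; apply/setP => x; rewrite !inE ffunE.
case: (eqVneq x c) => [->|xc]; first by rewrite eqxx andbT -in_setU1.
case: (eqVneq x u) => [xu|xu] /=.
  move: cV; rewrite in_setU1 -xu eq_sym (negbTE xc) /= => cV'.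
  by rewrite xu (neq_uV uV (fV _ cV')).
by apply/negbTE; rewrite negb_and; case: (boolP (x \in V)) => // /fV /(neq_uV uV) ->.
Qed.

Lemma in_FP V d f : in_F V d f ->
  (forall v, v \in V -> f v \in V /\ #|[set x in V | f x == v]| = d v) /\
  (forall v, v \notin V -> f v = v).
Proof.
move/forallP => H; split => v vV; move: (H v); rewrite ?vV ?(negbTE vV).
  by case/andP => -> /eqP.
by move/eqP.
Qed.

Lemma ins_in_F u c V d f : u \notin V -> d u = 1%N -> in_F V d f -> c \in u |: V ->
  in_F (u |: V) d (ins u c f).
Proof.
move=> uV du /in_FP [H1 H2] cV.
have fV x : x \in V -> f x \in V by move=> /H1 [].
apply/forallP => v; case: ifP => vV'.
  apply/andP; split.
    rewrite ffunE; case: (eqVneq v c) => [_|vc]; first by rewrite setU11.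
    case: (eqVneq v u) => [vu|vu].
      move: cV; rewrite in_setU1 -vu eq_sym (negbTE vc) /= => cV'.
      by rewrite in_setU1 fV ?orbT.
    by move: vV'; rewrite !in_setU1 (negbTE vu) /= => /fV ->; rewrite orbT.
  move: vV'; rewrite in_setU1; case: (eqVneq v u) => [->|vu] /= vV.
    by rewrite preu // cards1 du.
  by rewrite card_pre_ins // (H1 _ vV).2.
move/negbT: vV'; rewrite in_setU1 negb_or => /andP[vu vV]; rewrite ffunE.
have vc : v != c.
  by apply/eqP => vc; move: cV; rewrite -vc in_setU1 (negbTE vu) /= => vV2; rewrite vV2 in vV.
by rewrite (negbTE vc) (negbTE vu) H2.
Qed.

Lemma recovK u c f : f c = u -> ins u c (recov u c f) = f.
Proof.
move=> fc; apply/ffunP => x; rewrite !ffunE.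
case: (eqVneq x c) => [->|xc] //.
case: (eqVneq x u) => [xu|xu] //.
by rewrite -xu eq_sym (negbTE xc) eqxx.
Qed.

Lemma insK u c f : f u = u -> recov u c (ins u c f) = f.
Proof.
move=> fu; apply/ffunP => x; rewrite !ffunE.
case: (eqVneq x u) => [->|xu] //.
case: (eqVneq x c) => [xc|xc] //.
by rewrite -xc eq_sym (negbTE xu) eqxx.
Qed.


Lemma recov_in_F u c V d f : u \notin V -> in_F (u |: V) d f ->
  [set x in u |: V | f x == u] = [set c] -> in_F V d (recov u c f).
Proof.
move=> uV /in_FP [H1 H2] pre.
have : c \in [set x in u |: V | f x == u] by rewrite pre set11.
rewrite inE => /andP[cV /eqP fc].
have e := recovK fc.
have nu x : x \in u |: V -> x != c -> f x != u.
  move=> xV xc; apply: contra xc => fxu; by rewrite -in_set1 -pre inE xV fxu.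
apply/forallP => v; case: ifP => vV.
  have vu := neq_uV uV vV.
  have vV' : v \in u |: V by rewrite in_setU1 vV orbT.
  apply/andP; split.
    rewrite ffunE vu; case: (eqVneq v c) => [vc|vc].
      have uV' : u \in u |: V by rewrite setU11.
      have fuV := (H1 _ uV').1.
      have fuu : f u != u.
        by apply: nu => //; rewrite -vc; apply/eqP => uv; rewrite uv vV in uV.
      by move: fuV; rewrite in_setU1 (negbTE fuu).
    by move: (H1 _ vV').1; rewrite in_setU1 (negbTE (nu _ vV' vc)).
  by rewrite -(card_pre_ins _ uV cV vV) e (H1 _ vV').2.
rewrite ffunE; case: (eqVneq v u) => [->|vu] //.
have vc : v != c.
  by apply/eqP => vc; move: cV; rewrite -vc in_setU1 (negbTE vu) vV.
by rewrite (negbTE vc) H2 // in_setU1 (negbTE vu) vV.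
Qed.

Lemma card_corr u V d (P : pred {ffun 'I_n -> 'I_n}) : u \notin V -> d u = 1%N ->
  #|[set f | in_F (u |: V) d f && P f]| =
  #|[set p in setX [set f | in_F V d f] (u |: V) | P (ins u p.2 p.1)]|.
Proof.
move=> uV du.
set A := [set p in _ | _].
have inj : {in A &, injective (fun p => ins u p.2 p.1)}.
  move=> [f1 c1] [f2 c2]; rewrite !inE -!in_setU1 /= => /andP[/andP[F1 C1] _] /andP[/andP[F2 C2] _] E.
  have fV1 x (xV : x \in V) := ((in_FP F1).1 x xV).1.
  have fV2 x (xV : x \in V) := ((in_FP F2).1 x xV).1.
  have ec : c1 = c2.
    by apply/set1_inj; rewrite -(preu (f:=f1) uV fV1 C1) -(preu (f:=f2) uV fV2 C2) E.
  rewrite -ec in E *.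
  by rewrite -(insK c1 ((in_FP F1).2 u uV)) -(insK c1 ((in_FP F2).2 u uV)) E.
rewrite -(card_in_imset inj); apply: eq_card => f; rewrite inE.
apply/andP/imsetP => [[Ff Pf]|[[g c] pA ->]].
  have := ((in_FP Ff).1 u (setU11 u V)).2; rewrite du => /eqP/cards1P [c pre].
  have : c \in [set x in u |: V | f x == u] by rewrite pre set11.
  rewrite inE => /andP[cV /eqP fc].
  exists (recov u c f, c); last by rewrite recovK.
  by rewrite !inE -in_setU1 /= recovK // Pf cV andbT (recov_in_F uV Ff pre).
move: pA; rewrite !inE -in_setU1 /= => /andP[/andP[Fg C] Pg]; split => //.
exact: ins_in_F.
Qed.

Local Open Scope ring_scope.

Lemma sum_card (T : finType) (A : {set T}) (Q : pred T) :
  \sum_(x in A) (Q x)%:R = (#|[set x in A | Q x]|)%:R :> rat.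
Proof.
rewrite -sum1_card natr_sum [RHS]big_mkcond [LHS]big_mkcond.
by apply: eq_bigr => x _; rewrite inE; case: (x \in A); case: (Q x).
Qed.

Lemma step_law u V d : u \notin V -> d u = 1%N -> forall E',
  step u (fungraph_law V d) E' = fungraph_law (u |: V) d E'.
Proof.
move=> uV du E'.
set F := [set f | in_F V d f].
have cardF' : #|[set f | in_F (u|:V) d f]| = (#|F| * #|V|.+1)%N.
  transitivity #|[set f | in_F (u|:V) d f && predT f]|.
    by apply: eq_card => f; rewrite !inE andbT.
  have -> : #|V|.+1 = #|u |: V| by rewrite cardsU1 uV.
  rewrite card_corr // -cardsX.
  by apply: eq_card => p; rewrite !inE andbT.
have cardN' := @card_corr u V d (fun f => graph_on (u|:V) f == E') uV du.
rewrite /fungraph_law /step cardF' cardN' -/F.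
have NE E : (#|[set f | in_F V d f && (graph_on V f == E)]|%:R : rat)
   = \sum_(f in F) (graph_on V f == E)%:R.
  by rewrite sum_card; congr (_%:R); apply: eq_card => f; rewrite !inE.
under eq_bigr => E _ do rewrite NE.
transitivity (#|F|%:R^-1 * \sum_(f in F) trans u (graph_on V f) E').
  under eq_bigr => E _ do rewrite mulrAC mulr_suml.
  rewrite -mulr_suml exchange_big mulrC; congr (_ * _); apply: eq_bigr => f _.
  rewrite (bigD1 (graph_on V f)) //= eqxx mul1r big1 ?addr0 //.
  by move=> E; rewrite eq_sym => /negbTE ->; rewrite !mul0r.
have TR f : f \in F -> trans u (graph_on V f) E' =
    (#|V|.+1)%:R^-1 * \sum_(c in u |: V) (graph_on (u|:V) (ins u c f) == E')%:R.
  rewrite inE => Ff; have [H1 H2] := in_FP Ff.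
  have cG : #|graph_on V f| = #|V| by rewrite /graph_on card_imset //; move=> x y [].
  rewrite /trans cG big_setU1 //=; congr (_ * (_ + _)).
    by rewrite graph_ins_u ?H2 // eq_sym.
  have GE : graph_on V f = [set (v, f v) | v in V] by [].
  rewrite {1}GE big_imset /=; last by move=> x y _ _ [].
  by apply: eq_bigr => v vV; rewrite graph_ins_c // eq_sym.
under eq_bigr => f Ff do rewrite (TR f Ff).
rewrite -mulr_sumr.
rewrite (pair_big_dep (fun f => f \in F) (fun f c => c \in u |: V)
   (fun f c => (graph_on (u|:V) (ins u c f) == E')%:R)) /=.
rewrite (eq_bigl (fun p => p \in setX F (u |: V))); last by move=> [f c]; rewrite in_setX.
rewrite sum_card natrM invfM mulrA mulrC; congr (_%:R * _).
Qed.

Lemma next_None V : next_vertex V = None -> V = setT.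
Proof.
rewrite /next_vertex; case: pickP => // H _.
apply/setP => x; rewrite inE; apply/negPn/negP => xV.
have exP : exists m, [exists i in ~: V, val i == m].
  by exists (val x); apply/existsP; exists x; rewrite inE xV eqxx.
case: (ex_minnP exP) => m /existsP [i /andP [iV /eqP im]] mmin.
move: (H i); rewrite iV /= => /negbT/negP; apply.
apply/forallP => j; apply/implyP => jV; rewrite im; apply: mmin.
by apply/existsP; exists j; rewrite jV eqxx.
Qed.

Lemma next_Some V u : next_vertex V = Some u -> u \notin V.
Proof.
by rewrite /next_vertex; case: pickP => // x /andP[xV _] [<-]; rewrite inE in xV.
Qed.

Lemma iter_law d k V : (forall v, v \notin V -> d v = 1%N) -> (#|~: V| <= k)%N ->
  extend_iter k V (fungraph_law V d) = fungraph_law setT d.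
Proof.
elim: k V => [|k IH] V Hd Hk /=.
  move: Hk; rewrite leqn0 => /eqP/cards0_eq CV.
  by rewrite -(setCK V) CV setC0.
case E: (next_vertex V) => [u|]; last by rewrite (next_None E).
have uV := next_Some E.
have -> : step u (fungraph_law V d) = fungraph_law (u |: V) d.
  by apply: functional_extensionality => E'; apply: step_law; rewrite ?Hd.
apply: IH.
  by move=> v; rewrite in_setU1 negb_or => /andP[_ /Hd].
have := cardsC V; have := cardsC (u |: V); rewrite cardsU1 uV /= !card_ord. move=> h1 h2.
move: Hk h1 h2; set x := #|~: (u |: V)|; set y := #|~: V|; set z := #|V|; lia.
Qed.

End Ins.

Theorem lemma4p5 (n : nat) (d : 'I_n -> nat) (w : 'I_n) (V : {set 'I_n}) :
  (\sum_(j < n) d j)%N = n ->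
  is_Vw d w V ->
  n_extension V (fungraph_law V d) = fungraph_law setT d.
Proof.
move=> _ HV; rewrite /n_extension; apply: iter_law.
  move=> v vV; move: HV; rewrite /is_Vw; case: ifP => _.
    by move=> HV; rewrite HV inE in vV.
  by case=> S [_ _ HS HV]; apply: HS; rewrite HV inE negbK in vV.
by rewrite -[n in (_ <= n)%N]card_ord max_card.
Qed.
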